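(* Let $F:\mathcal{P}(V,A)\to S_2(A)$ be a non-Marian, reducible, weakly viable consular election rule satisfying SPP and SPO. Let $R\subseteq S_2(A)$ be the range of $F$ and $D=\{\alpha(L)|_R : L \text{ a linear order on } A\}$. Then $D$ is not a linked domain over $R$.
   Context: $V$ is a finite nonempty set of voters, $A$ a finite set of alternatives; a profile $P$ assigns to each voter $i$ a linear order $P_i$ on $A$; $P_i'P_{-i}$ replaces voter $i$'s order by $P_i'$; $P|_B$ is the profile of restrictions to $B\subseteq A$. $S_2(A)$ is the set of 2-element subsets of $A$; a consular election rule is a map $F:\mathcal{P}(V,A)\to S_2(A)$. SPO: for all $P$, $i$, $P_i'$, $\mathrm{best}(P_i,F(P))\succeq_i\mathrm{best}(P_i,F(P_i'P_{-i}))$; SPP: same with $\mathrm{worst}$, where $\mathrm{best}(P_i,W)$, $\mathrm{worst}(P_i,W)$ are the $P_i$-best and $P_i$-worst elements of $W$. Weakly viable: every $a\in A$ lies in $F(P)$ for some $P$. Marian: some $m\in A$ lies in $F(P)$ for every $P$. Reducible: there is a partition $A=B\uplus C$ and social choice functions $G:\mathcal{P}(V,B)\to B$, $H:\mathcal{P}(V,C)\to C$ with $F(P)=\{G(P|_B),H(P|_C)\}$ for all $P$. For a linear order $L$ on $A$, $\alpha(L)$ is the linear order on $S_2(A)$ with $X$ above $Y$ iff $\mathrm{best}(L,X)$ is above $\mathrm{best}(L,Y)$ in $L$, or they are equal and $\mathrm{worst}(L,X)$ is above $\mathrm{worst}(L,Y)$; $\alpha(L)|_R$ is its restriction to $R$.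 In a domain $D$ of linear orders over $R$, $x,y\in R$ are connected if some order in $D$ ranks $x$ first and $y$ second and some order in $D$ ranks $y$ first and $x$ second; $D$ is linked if $R$ can be enumerated $x_1,\dots,x_q$ with $x_1$ connected to $x_2$ and each $x_j$ ($j\ge3$) connected to at least two of $x_1,\dots,x_{j-1}$. *)

(* Defs.v *)
From mathcomp Require Import all_boot.
Set Implicit Arguments. Unset Strict Implicit. Unset Printing Implicit Defensive.

(* A (strict) linear order on T: [lo_rel L x y] means "x is ranked above y". *)
Record linord (T : eqType) := LinOrd {
  lo_rel :> rel T;
  lo_irr : irreflexive lo_rel;
  lo_trans : transitive lo_rel;
  lo_total : forall x y, x != y -> lo_rel x y || lo_rel y x }.

Definition profile (V : finType) (T : eqType) := V -> linord T.

Definition upd (V : finType) (T : eqType) (P : profile V T) (i : V) (L : linord T)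
  : profile V T := fun j => if j == i then L else P j.

Definition subB (A : finType) (B : {set A}) := {x : A | x \in B}.

Section Restr.
Variables (A : finType) (B : {set A}) (L : linord A).
Definition restr_rel : rel (subB B) := fun x y => L (val x) (val y).
Lemma restr_irr : irreflexive restr_rel.
Proof. by move=> x; exact: lo_irr. Qed.
Lemma restr_trans : transitive restr_rel.
Proof. by move=> y x z; exact: lo_trans. Qed.
Lemma restr_total x y : x != y -> restr_rel x y || restr_rel y x.
Proof. by move=> nxy; apply: lo_total; rewrite val_eqE. Qed.
Definition restr_lo : linord (subB B) := LinOrd restr_irr restr_trans restr_total.
End Restr.

Definition restr_prof (V A : finType) (P : profile V A) (B : {set A})
  : profile V (subB B) := fun i => restr_lo B (P i).

Definition pair2 (A : finType) := {X : {set A} | #|X| == 2}.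

Definition is_best (A : finType) (L : linord A) (W : {set A}) (x : A) : Prop :=
  x \in W /\ forall y, y \in W -> y != x -> L x y.
Definition is_worst (A : finType) (L : linord A) (W : {set A}) (x : A) : Prop :=
  x \in W /\ forall y, y \in W -> y != x -> L y x.

Definition weakly_above (A : finType) (L : linord A) (x y : A) : Prop :=
  x = y \/ L x y.

Section Rules.
Variables (V A : finType).
Implicit Type F : profile V A -> pair2 A.

Definition SPO F : Prop :=
  forall (P : profile V A) (i : V) (Li' : linord A) (b b' : A),
    is_best (P i) (val (F P)) b ->
    is_best (P i) (val (F (upd P i Li'))) b' ->
    weakly_above (P i) b b'.

Definition SPP F : Prop :=
  forall (P : profile V A) (i : V) (Li' : linord A) (w w' : A),
    is_worst (P i) (val (F P)) w ->
    is_worst (P i) (val (F (upd P i Li'))) w' ->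
    weakly_above (P i) w w'.

Definition weakly_viable F : Prop :=
  forall a : A, exists P, a \in val (F P).

Definition marian F : Prop :=
  exists m : A, forall P, m \in val (F P).

Definition reducible F : Prop :=
  exists (B C : {set A}),
    [/\ B :&: C = set0, B :|: C = setT &
    exists (G : profile V (subB B) -> subB B) (H : profile V (subB C) -> subB C),
      forall P, val (F P) = [set val (G (restr_prof P B)); val (H (restr_prof P C))]].

Definition range_of F : pair2 A -> Prop := fun X => exists P, F P = X.
End Rules.

Definition alpha (A : finType) (L : linord A) (X Y : pair2 A) : Prop :=
  exists bX bY, is_best L (val X) bX /\ is_best L (val Y) bY /\
    (L bX bY \/
     (bX = bY /\ exists wX wY, is_worst L (val X) wX /\ is_worst L (val Y) wY /\ L wX wY)).

(* Domains of linear orders over R (R a subset of T); an order over R is given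
   by a relation on T of which only the part on R matters. *)
Definition ranks_first_second (T : eqType) (R : T -> Prop) (r : T -> T -> Prop) (x y : T)
  : Prop :=
  [/\ R x, R y, x <> y,
      (forall z, R z -> z <> x -> r x z) &
      (forall z, R z -> z <> x -> z <> y -> r y z)].

Definition connected (T : eqType) (R : T -> Prop) (D : (T -> T -> Prop) -> Prop) (x y : T)
  : Prop :=
  (exists r, D r /\ ranks_first_second R r x y) /\
  (exists r, D r /\ ranks_first_second R r y x).

(* R can be enumerated x_1..x_q with x_1 connected to x_2 and each x_j (j >= 3)
   connected to at least two of x_1..x_{j-1} (indices shifted to start at 0). *)
Definition linked (T : eqType) (R : T -> Prop) (D : (T -> T -> Prop) -> Prop) : Prop :=
  exists (s : seq T) (x0 : T),
    [/\ uniq s, (forall x, x \in s <-> R x), 2 <= size s,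
        connected R D (nth x0 s 0) (nth x0 s 1) &
        forall j, 2 <= j < size s ->
          exists i1 i2, [/\ i1 < j, i2 < j, i1 != i2,
                         connected R D (nth x0 s j) (nth x0 s i1) &
                         connected R D (nth x0 s j) (nth x0 s i2)]].

Definition alpha_domain (A : finType) (R : pair2 A -> Prop)
  : (pair2 A -> pair2 A -> Prop) -> Prop :=
  fun r => exists L : linord A, forall X Y, R X -> R Y -> (r X Y <-> alpha L X Y).

(* Main.v *)
Require Import Defs.
From mathcomp Require Import all_boot.
From Stdlib Require Import ProofIrrelevance FunctionalExtensionality.

Set Implicit Arguments. Unset Strict Implicit. Unset Printing Implicit Defensive.

Lemma linord_eq (T : eqType) (L1 L2 : linord T) :
  (forall x y, L1 x y = L2 x y) -> L1 = L2.
Proof.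
destruct L1 as [r1 i1 t1 o1], L2 as [r2 i2 t2 o2]; simpl => h.
have e : r1 = r2 by apply: functional_extensionality => x;
  apply: functional_extensionality => y; exact: h.
subst r2; f_equal; apply: proof_irrelevance.
Qed.

Definition comb_rel (A : finType) (B : {set A}) (L1 L2 : linord A) : rel A :=
  fun u v => if u \in B then (if v \in B then L1 u v else true)
             else (if v \in B then false else L2 u v).

Lemma comb_irr (A : finType) (B : {set A}) (L1 L2 : linord A) :
  irreflexive (comb_rel B L1 L2).
Proof. by move=> x; rewrite /comb_rel; case: (x \in B); apply: lo_irr. Qed.

Lemma comb_trans (A : finType) (B : {set A}) (L1 L2 : linord A) :
  transitive (comb_rel B L1 L2).
Proof.
move=> y x z; rewrite /comb_rel.
case: (x \in B); case: (y \in B); case: (z \in B) => //; apply: lo_trans.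
Qed.

Lemma comb_total (A : finType) (B : {set A}) (L1 L2 : linord A) x y :
  x != y -> comb_rel B L1 L2 x y || comb_rel B L1 L2 y x.
Proof.
move=> nxy; rewrite /comb_rel.
case: (x \in B); case: (y \in B) => //; exact: lo_total.
Qed.

Definition comb (A : finType) (B : {set A}) (L1 L2 : linord A) : linord A :=
  LinOrd (@comb_irr A B L1 L2) (@comb_trans A B L1 L2) (@comb_total A B L1 L2).

Lemma combine (V A : finType) (B C : {set A}) (hBC : B :&: C = set0)
  (P1 P2 : profile V A) :
  exists P : profile V A,
    restr_prof P B = restr_prof P1 B /\ restr_prof P C = restr_prof P2 C.
Proof.
have nC : forall a, a \in C -> a \notin B.
  move=> a aC; apply/negP=> aB.
  have : a \in B :&: C by rewrite inE aB aC.
  by rewrite hBC inE.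
exists (fun i => comb B (P1 i) (P2 i)); split;
  apply: functional_extensionality => i; apply: linord_eq => x y;
  rewrite /= /restr_rel /= /comb_rel.
  by rewrite (valP x) (valP y).
by rewrite (negbTE (nC _ (valP x))) (negbTE (nC _ (valP y))).
Qed.

Lemma best_unique (A : finType) (L : linord A) W b b' :
  is_best L W b -> is_best L W b' -> b = b'.
Proof.
move=> [hb1 hb2] [hb1' hb2']; case: (eqVneq b b') => // ne.
have h1 := hb2 b' hb1' (ltac:(by rewrite eq_sym)).
have h2 := hb2' b hb1 ne.
by have := lo_trans h1 h2; rewrite lo_irr.
Qed.

Lemma set2_dec (A : finType) (B : {set A}) (g h g' h' : A) :
  [set g; h] = [set g'; h'] -> g \in B -> h \notin B -> g' \in B -> h' \notin B ->
  g = g' /\ h = h'.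
Proof.
move=> e gB hB g'B h'B.
have gi : g \in [set g'; h'] by rewrite -e in_set2 eqxx.
have hi : h \in [set g'; h'] by rewrite -e in_set2 eqxx orbT.
move: gi hi; rewrite !in_set2 => /orP[/eqP->|/eqP eg]; last by subst; rewrite gB in h'B.
move=> /orP[/eqP eh|/eqP->] //; by subst; rewrite g'B in hB.
Qed.

Lemma other_side (A : finType) (B : {set A}) (R : pair2 A -> Prop)
  (pR : forall X, R X -> exists g h, val X = [set g; h] /\ g \in B /\ h \notin B)
  X a u : R X -> a \in val X -> u \in val X -> u != a -> (u \in B) = ~~ (a \in B).
Proof.
move=> RX; have [g [h [-> [gB hB]]]] := pR X RX.
rewrite !in_set2 => /orP[/eqP->|/eqP->] /orP[/eqP->|/eqP->]; rewrite ?eqxx //.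
  by rewrite gB (negbTE hB).
by rewrite gB (negbTE hB).
Qed.

Lemma same_side (A : finType) (B : {set A}) (R : pair2 A -> Prop)
  (pR : forall X, R X -> exists g h, val X = [set g; h] /\ g \in B /\ h \notin B)
  X u1 u2 : R X -> u1 \in val X -> u2 \in val X -> (u1 \in B) = (u2 \in B) -> u1 = u2.
Proof.
move=> RX; have [g [h [-> [gB hB]]]] := pR X RX.
rewrite !in_set2 => /orP[/eqP->|/eqP->] /orP[/eqP->|/eqP->] //.
  by rewrite gB (negbTE hB).
by rewrite gB (negbTE hB).
Qed.

Lemma two_eq (A : finType) (B : {set A}) (R : pair2 A -> Prop)
  (pR : forall X, R X -> exists g h, val X = [set g; h] /\ g \in B /\ h \notin B)
  X a e : R X -> a \in val X -> e \in val X -> a != e -> val X = [set a; e].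
Proof.
move=> RX; have [g [h [-> [gB hB]]]] := pR X RX.
rewrite !in_set2 => /orP[/eqP->|/eqP->] /orP[/eqP->|/eqP->]; rewrite ?eqxx //.
by rewrite setUC.
Qed.

Lemma share (A : finType) (B : {set A}) (R : pair2 A -> Prop)
  (pR : forall X, R X -> exists g h, val X = [set g; h] /\ g \in B /\ h \notin B)
  (prod : forall X Y g1 h1 g2 h2, R X -> R Y -> val X = [set g1; h1] ->
     val Y = [set g2; h2] -> g1 \in B -> h1 \notin B -> g2 \in B -> h2 \notin B ->
     exists Z, R Z /\ val Z = [set g1; h2])
  r X Y :
  alpha_domain R r -> ranks_first_second R r X Y ->
  exists a, a \in val X /\ a \in val Y.
Proof.
move=> [L hL] [RX RY nXY hX hY].
case: (boolP [exists a, (a \in val X) && (a \in val Y)]) =>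
  [/existsP [a /andP[? ?]]|/existsPn hd]; first by exists a.
exfalso.
have H : forall a, a \in val X -> a \in val Y -> False.
  by move=> a h1 h2; have := hd a; rewrite h1 h2.
have := proj1 (hL X Y RX RY) (hX Y RY (fun e => nXY (esym e))).
case=> bX [bY [bestX [bestY [LXY|[eXY _]]]]]; last first.
  by subst; apply: (H bY (proj1 bestX) (proj1 bestY)).
have nb : ~ L bY bX by move=> h; have := lo_trans LXY h; rewrite lo_irr.
have key : forall Z w, R Z -> (forall a, a \in val Z -> a = bX \/ a = w) ->
    bX \in val Z -> w \in val Z -> w \in val Y -> False.
  move=> Z w RZ hZ bZin wZ wY.
  have nZX : Z <> X by move=> e; subst; apply: (H w wZ wY).
  have nZY : Z <> Y by move=> e; subst; apply: (H bX (proj1 bestX) bZin).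
  have := proj1 (hL Y Z RY RZ) (hY Z RZ nZX nZY).
  case=> bY' [bZ [bestY' [bestZ disj]]].
  have eY := best_unique bestY' bestY; subst bY'.
  case: (hZ bZ (proj1 bestZ)) => ebZ; subst bZ.
    case: disj => [//|[e _]].
    by apply: (H bX (proj1 bestX)); rewrite -e; exact: (proj1 bestY).
  have nwb : bX != w by apply/eqP => e; subst; apply: (H w (proj1 bestX) wY).
  have wbX : L w bX := proj2 bestZ bX bZin nwb.
  case: disj => [Lbw|[e _]]; first by apply: nb; exact: lo_trans Lbw wbX.
  by apply: nb; rewrite e.
have [g1 [h1 [eX [g1B h1B]]]] := pR X RX.
have [g2 [h2 [eY [g2B h2B]]]] := pR Y RY.
move: (proj1 bestX); rewrite eX in_set2 => /orP[/eqP eb|/eqP eb]; subst bX.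
  have [Z [RZ eZ]] := prod X Y g1 h1 g2 h2 RX RY eX eY g1B h1B g2B h2B.
  apply: (key Z h2 RZ).
  - by move=> a; rewrite eZ in_set2 => /orP[/eqP->|/eqP->]; [left|right].
  - by rewrite eZ in_set2 eqxx.
  - by rewrite eZ in_set2 eqxx orbT.
  - by rewrite eY in_set2 eqxx orbT.
have [Z [RZ eZ]] := prod Y X g2 h2 g1 h1 RY RX eY eX g2B h2B g1B h1B.
apply: (key Z g2 RZ).
- by move=> a; rewrite eZ in_set2 => /orP[/eqP->|/eqP->]; [right|left].
- by rewrite eZ in_set2 eqxx orbT.
- by rewrite eZ in_set2 eqxx.
- by rewrite eY in_set2 eqxx.
Qed.

Lemma all_contain (A : finType) (B : {set A}) (R : pair2 A -> Prop)
  (pR : forall X, R X -> exists g h, val X = [set g; h] /\ g \in B /\ h \notin B)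
  (s : seq (pair2 A)) x0 a :
  uniq s -> (forall x, x \in s <-> R x) ->
  a \in val (nth x0 s 0) -> a \in val (nth x0 s 1) ->
  (forall j, 2 <= j < size s -> exists i1 i2, [/\ i1 < j, i2 < j, i1 != i2,
     (exists e, e \in val (nth x0 s j) /\ e \in val (nth x0 s i1)) &
     (exists e, e \in val (nth x0 s j) /\ e \in val (nth x0 s i2))]) ->
  forall j, j < size s -> a \in val (nth x0 s j).
Proof.
move=> us hs a0 a1 hj.
have Ri : forall k, k < size s -> R (nth x0 s k).
  by move=> k hk; apply/hs; exact: mem_nth.
suff : forall n j, j < n -> j < size s -> a \in val (nth x0 s j).
  by move=> h j; apply: (h j.+1 j (ltnSn j)).
elim=> [//|n IH] j; rewrite ltnS => jn js.
case: j jn js => [|[|j]] jn js; [exact: a0|exact: a1|].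
have [i1 [i2 [i1j i2j ne [e1 [e1j e1i]] [e2 [e2j e2i]]]]] := hj j.+2 (ltac:(by rewrite js)).
have ai1 := IH i1 (leq_trans i1j jn) (ltn_trans i1j js).
have ai2 := IH i2 (leq_trans i2j jn) (ltn_trans i2j js).
case: (boolP (a \in val (nth x0 s j.+2))) => // naj.
have e1a : e1 != a by apply/eqP => e; subst; rewrite e1j in naj.
have e2a : e2 != a by apply/eqP => e; subst; rewrite e2j in naj.
have s1 := other_side pR (Ri _ (ltn_trans i1j js)) ai1 e1i e1a.
have s2 := other_side pR (Ri _ (ltn_trans i2j js)) ai2 e2i e2a.
have e12 : e1 = e2 := same_side pR (Ri _ js) e1j e2j (ltac:(by rewrite s1 s2)).
subst e2.
have ae : a != e1 by rewrite eq_sym.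
have eq1 := two_eq pR (Ri _ (ltn_trans i1j js)) ai1 e1i ae.
have eq2 := two_eq pR (Ri _ (ltn_trans i2j js)) ai2 e2i ae.
have : nth x0 s i1 = nth x0 s i2 by apply: val_inj; rewrite eq1 eq2.
move/eqP; rewrite nth_uniq ?(ltn_trans i1j js) ?(ltn_trans i2j js) //.
by rewrite (negbTE ne).
Qed.

Theorem proposition55 (V A : finType) (hV : 0 < #|V|)
  (F : profile V A -> pair2 A) :
  ~ marian F -> reducible F -> weakly_viable F -> SPP F -> SPO F ->
  ~ linked (range_of F) (alpha_domain (range_of F)).
Proof.
move=> nM [B [C [hBC hBUC [G [H hF]]]]] _ _ _ [s [x0 [us hs hsz c01 hj]]].
have nC : forall a, a \in C -> a \notin B.
  move=> a aC; apply/negP=> aB.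
  have : a \in B :&: C by rewrite inE aB aC.
  by rewrite hBC inE.
have pR : forall X, range_of F X ->
    exists g h, val X = [set g; h] /\ g \in B /\ h \notin B.
  move=> X [P <-]; exists (val (G (restr_prof P B))), (val (H (restr_prof P C))).
  rewrite hF; split => //; split; [exact: valP | exact: nC (valP _)].
have prod : forall X Y g1 h1 g2 h2, range_of F X -> range_of F Y ->
     val X = [set g1; h1] -> val Y = [set g2; h2] ->
     g1 \in B -> h1 \notin B -> g2 \in B -> h2 \notin B ->
     exists Z, range_of F Z /\ val Z = [set g1; h2].
  move=> X Y g1 h1 g2 h2 [P1 <-] [P2 <-] e1 e2 g1B h1B g2B h2B.
  have [P [eB eC]] := combine hBC P1 P2.
  exists (F P); split; first by exists P.
  rewrite hF eB eC.
  rewrite hF in e1; rewrite hF in e2.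
  have [d1 _] := set2_dec e1 (valP _) (nC _ (valP _)) g1B h1B.
  have [_ d2] := set2_dec e2 (valP _) (nC _ (valP _)) g2B h2B.
  by rewrite d1 d2.
have [r [Dr rf]] := proj1 c01.
have [a [a0 a1]] := share pR prod Dr rf.
have hj' : forall j, 2 <= j < size s -> exists i1 i2, [/\ i1 < j, i2 < j, i1 != i2,
     (exists e, e \in val (nth x0 s j) /\ e \in val (nth x0 s i1)) &
     (exists e, e \in val (nth x0 s j) /\ e \in val (nth x0 s i2))].
  move=> j hjs; have [i1 [i2 [h1 h2 h3 c1 c2]]] := hj j hjs.
  exists i1, i2; split => //.
    by have [r1 [D1 rf1]] := proj1 c1; have := share pR prod D1 rf1.
  by have [r2 [D2 rf2]] := proj1 c2; have := share pR prod D2 rf2.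
have inv := all_contain pR us hs a0 a1 hj'.
apply: nM; exists a => P.
have inS : F P \in s by apply/hs; exists P.
rewrite -(nth_index x0 inS); apply: inv; by rewrite index_mem.
Qed.
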